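(* Let $n\ge2$, $A\in\mathbb{R}^{n\times n}$, $C\in\mathbb{R}^{1\times n}$ with $(C,A)$ observable, i.e. $\operatorname{rank}[C^T\ A^TC^T\ \cdots\ (A^{n-1})^TC^T]=n$. For a matrix $M\in\mathbb{R}^{r\times n}$ let $\mathrm{nul}(M)$ denote any $n\times d$ matrix whose columns span $\mathcal{N}(M)$, where $d=\dim\mathcal{N}(M)$. Define $X_0:=\mathrm{nul}(C)$ and, for $i=1,\ldots,n-2$, $X_i:=\mathrm{nul}\!\left(\begin{bmatrix} C\\ \mathrm{nul}((AX_{i-1})^T)^T\end{bmatrix}\right)$. Let $L_{\rm pre}:=AX_{n-2}$. Then $L_{\rm pre}$ is a nonzero vector in $\mathbb{R}^n$ (a single column) with $CL_{\rm pre}\neq0$, and $L:=AL_{\rm pre}/(CL_{\rm pre})\in\mathbb{R}^{n\times1}$ makes $A-LC$ nilpotent.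
   Context: $\mathcal{N}(M)$ denotes the null space of $M$. When $\mathcal{N}(M)=\{0\}$ the matrix $\mathrm{nul}(M)$ has zero columns. *)

(* Defs.v *)
From HB Require Import structures.
From mathcomp Require Import all_boot all_order all_algebra.
Set Implicit Arguments. Unset Strict Implicit. Unset Printing Implicit Defensive.
Import Order.TTheory GRing.Theory Num.Theory.
Local Open Scope ring_scope.

(* Null space N(M) of M : 'M_(r,n) = { v : 'cV_n | M *m v = 0 }.
   Row-vector view: v^T *m M^T = 0, i.e. v^T lies in the row space of
   kermx M^T.  [is_nul M N] : the columns of N : 'M_(n,d) span N(M) and
   d = dim N(M). *)
Definition is_nul (R : fieldType) (r n d : nat) (M : 'M[R]_(r, n)) (N : 'M[R]_(n, d)) : Prop :=
  d = \rank (kermx M^T) /\ (N^T == kermx M^T)%MS.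

Definition obsmx (R : fieldType) (n : nat) (A : 'M[R]_n) (C : 'M[R]_(1, n)) : 'M[R]_n :=
  \matrix_(k < n, i < n) (((A ^+ i)^T *m C^T) k 0).

Definition mx_nilpotent (R : fieldType) (n : nat) (M : 'M[R]_n) : Prop :=
  exists k : nat, M ^+ k = 0.

(* Main.v *)
Require Import Defs.
From HB Require Import structures.
From mathcomp Require Import all_boot all_order all_algebra.
From Stdlib Require Import Lia.
Import Order.TTheory GRing.Theory Num.Theory.
Local Open Scope ring_scope.

Ltac nlia := repeat match goal with
  | H : is_true (_ <= _)%N |- _ => move/ssrnat.leP in H
  | H : is_true (_ < _)%N |- _ => move/ssrnat.ltP in H
  | H : is_true (_ == _)%N |- _ => move/eqP in H
  | H : is_true (~~ (_ == _))%N |- _ => move/eqP in H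
  end;
  try (apply/ssrnat.leP); try (apply/ssrnat.ltP);
  cbv [addn subn muln addn_rec subn_rec muln_rec] in *; lia.

Lemma eqmx_vec {F : fieldType} {n m1 m2 : nat} (P : 'M[F]_(m1, n)) (Q : 'M[F]_(m2, n)) :
  (forall v : 'rV[F]_n, (v <= P)%MS <-> (v <= Q)%MS) -> (P == Q)%MS.
Proof.
move=> H; apply/andP; split; apply/row_subP => r; apply/H; exact: row_sub.
Qed.

Lemma nulP {F : fieldType} {r n d : nat} {M : 'M[F]_(r, n)} {N : 'M[F]_(n, d)} :
  is_nul M N -> forall v : 'rV[F]_n, (v <= N^T)%MS <-> v *m M^T = 0.
Proof.
case=> _ /eqmxP E v; rewrite E; split; [by move/sub_kermxP | by move=> h; apply/sub_kermxP].
Qed.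

Lemma nul_rank {F : fieldType} {r n d : nat} {M : 'M[F]_(r, n)} {N : 'M[F]_(n, d)} :
  is_nul M N -> d = \rank N^T.
Proof. by case=> h /eqmx_rank ->. Qed.

Lemma subMP {F : fieldType} {n m p : nat} (K : 'M[F]_(m, n)) (M : 'M[F]_(n, p)) (v : 'rV[F]_p) :
  (v <= K *m M)%MS <-> exists y : 'rV[F]_n, (y <= K)%MS /\ v = y *m M.
Proof.
split.
  by case/submxP => w ->; exists (w *m K); rewrite submxMl mulmxA.
by case=> y [hy ->]; apply: submxMr.
Qed.

Lemma kerkerT {F : fieldType} {n d : nat} (G : 'M[F]_(n, d)) :
  (kermx (kermx G)^T <= G^T)%MS.
Proof.
have s : (G^T <= kermx (kermx G)^T)%MS.
  by apply/sub_kermxP; rewrite -trmx_mul mulmx_ker trmx0.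
have rk : \rank (kermx (kermx G)^T) = \rank G.
  rewrite (mxrank_ker (kermx G)^T) mxrank_tr (mxrank_ker G) subKn //.
  exact: rank_leq_row.
have := mxrank_leqif_eq s; rewrite rk mxrank_tr => -[_].
by rewrite eqxx => /esym /andP [].
Qed.

Lemma nulY {F : fieldType} {n d e : nat} {G : 'M[F]_(n, d)} {Y : 'M[F]_(n, e)} :
  is_nul G^T Y -> forall v : 'rV[F]_n, v *m Y = 0 <-> (v <= G^T)%MS.
Proof.
case=> _; rewrite trmxK => /andP [s1 s2] v; split.
  move=> hv; apply: (submx_trans _ (@kerkerT _ _ _ G)).
apply/sub_kermxP.
  case/submxP: s2 => D ->; by rewrite trmx_mul trmxK mulmxA hv mul0mx.
case/submxP => w ->.
move/sub_kermxP: s1 => h.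
by rewrite -mulmxA -(trmxK Y) -trmx_mul h trmx0 mulmx0.
Qed.

Lemma nulX {F : fieldType} {n k e : nat} {C : 'M[F]_(k, n)} {Y : 'M[F]_(n, e)} {d} {X : 'M[F]_(n, d)} :
  is_nul (col_mx C Y^T) X -> forall v : 'rV[F]_n, (v <= X^T)%MS <-> (v *m C^T = 0 /\ v *m Y = 0).
Proof.
move=> h v; rewrite (nulP h) tr_col_mx trmxK mul_mx_row.
split; first by move/eqP; rewrite row_mx_eq0 => /andP [/eqP -> /eqP ->].
by case=> -> ->; rewrite row_mx0.
Qed.

Definition Bk {F : fieldType} {n : nat} (A : 'M[F]_n) (C : 'M[F]_(1, n)) (j : nat) : 'cV[F]_n :=
  (A ^+ j)^T *m C^T.
Definition Om {F : fieldType} {n : nat} (A : 'M[F]_n) (C : 'M[F]_(1, n)) (i : nat) : 'M[F]_(n, i.+1) :=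
  \matrix_(k < n, j < i.+1) (Bk A C j k 0).

Lemma scal0 {F : fieldType} (M : 'M[F]_1) : M = 0 <-> M 0 0 = 0.
Proof.
split; first by move->; rewrite mxE.
by move=> h; apply/matrixP => a b; rewrite !ord1 h mxE.
Qed.

Lemma mulO {F : fieldType} {n : nat} (A : 'M[F]_n) C i (y : 'rV[F]_n) (j : 'I_i.+1) :
  (y *m Om A C i) 0 j = (y *m Bk A C j) 0 0.
Proof. by rewrite !mxE; apply: eq_bigr => k _; rewrite mxE. Qed.

Lemma kerO {F : fieldType} {n : nat} (A : 'M[F]_n) C i (y : 'rV[F]_n) :
  (y <= kermx (Om A C i))%MS <-> forall j, (j <= i)%N -> y *m Bk A C j = 0.
Proof.
split.
  move/sub_kermxP => h j hj; apply/scal0.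
  have hj' : (j < i.+1)%N by [].
  by have := mulO A C i y (Ordinal hj'); rewrite h mxE => <-.
move=> h; apply/sub_kermxP; apply/matrixP => a b; rewrite ord1 mulO h ?mxE //.
by rewrite -ltnS.
Qed.

Lemma obs0 {F : fieldType} {n : nat} (A : 'M[F]_n) C (hobs : \rank (obsmx A C) = n) (y : 'rV[F]_n) :
  (forall j, (j < n)%N -> y *m Bk A C j = 0) -> y = 0.
Proof.
move=> h; apply/eqP; rewrite -(mulmx_free_eq0 _ (B := obsmx A C)); last by rewrite /row_free hobs.
apply/eqP/matrixP => a b; rewrite ord1 [RHS]mxE.
have := h b (ltn_ord b); move/scal0 => <-; rewrite !mxE.
by apply: eq_bigr => k _; rewrite mxE.
Qed.

Lemma BkD {F : fieldType} {n : nat} (A : 'M[F]_n) C m j :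
  Bk A C (m + j) = (A ^+ j)^T *m Bk A C m.
Proof. by rewrite /Bk exprD -mulmxE trmx_mul mulmxA. Qed.

Lemma claim {R : fieldType} {n : nat} (A : 'M[R]_n) (C : 'M[R]_(1, n))
  (d : nat -> nat) (X : forall i : nat, 'M[R]_(n, d i))
  (e : nat -> nat) (Y : forall i : nat, 'M[R]_(n, e i))
  (hX0 : is_nul C (X 0%N))
  (hY : forall i : nat, (1 <= i <= n - 2)%N -> is_nul ((A *m X i.-1)^T) (Y i))
  (hX : forall i : nat, (1 <= i <= n - 2)%N -> is_nul (col_mx C (Y i)^T) (X i)) :
  forall i, (i <= n - 2)%N -> ((X i)^T == kermx (Om A C i) *m (A ^+ i)^T)%MS.
Proof.
elim => [_|i IH hi].
  apply: eqmx_vec => v; rewrite expr0 trmx1 mulmx1 (nulP hX0) kerO.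
  split => [h j | h].
    by rewrite leqn0 => /eqP ->; rewrite /Bk expr0 trmx1 mul1mx.
  by have := h 0%N (leqnn 0); rewrite /Bk expr0 trmx1 mul1mx.
have h1 : (1 <= i.+1 <= n - 2)%N by rewrite hi.
have IH' := IH (ltnW hi).
apply: eqmx_vec => v.
rewrite (nulX (hX _ h1)) (nulY (hY _ h1)) /= trmx_mul.
rewrite (eqmxMr A^T (eqmxP IH')) -mulmxA -trmx_mul mulmxE -exprS.
rewrite !subMP; split.
  case=> hc [y [hy ev]]; exists y; split => //.
  apply/kerO => j hj; case: (ltnP j i.+1) => hji.
    by apply: (proj1 (kerO A C i y) hy).
  have -> : j = i.+1 by apply/eqP; rewrite eqn_leq hj hji.
  by rewrite /Bk mulmxA -ev.
case=> y [hy ev]; split.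
  by rewrite ev -mulmxA; apply: (proj1 (kerO A C i.+1 y) hy).
exists y; split => //; apply/kerO => j hj.
by apply: (proj1 (kerO A C i.+1 y) hy); apply: leqW.
Qed.

Theorem mainTheorem10 (R : realFieldType) (n : nat) (hn : (2 <= n)%N)
  (A : 'M[R]_n) (C : 'M[R]_(1, n))
  (hobs : \rank (obsmx A C) = n)
  (d : nat -> nat) (X : forall i : nat, 'M[R]_(n, d i))
  (e : nat -> nat) (Y : forall i : nat, 'M[R]_(n, e i))
  (hX0 : is_nul C (X 0%N))
  (hY : forall i : nat, (1 <= i <= n - 2)%N -> is_nul ((A *m X i.-1)^T) (Y i))
  (hX : forall i : nat, (1 <= i <= n - 2)%N -> is_nul (col_mx C (Y i)^T) (X i)) :
  d (n - 2)%N = 1%N /\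
  forall j : 'I_(d (n - 2)%N),
    let Lpre : 'cV[R]_n := col j (A *m X (n - 2)%N) in
    Lpre != 0 /\ (C *m Lpre) 0 0 != 0 /\
    mx_nilpotent (A - (((C *m Lpre) 0 0)^-1 *: (A *m Lpre)) *m C).
Proof.
have rdX : forall i, (i <= n - 2)%N -> d i = \rank (X i)^T.
  case=> [|i] hi; first exact: nul_rank hX0.
  by apply: nul_rank (hX i.+1 _); rewrite hi.
set m := (n - 2)%N.
have hnm : n = m.+2.
  rewrite /m; nlia.
have cl := claim A C d X e Y hX0 hY hX m (leqnn m).
set K := kermx (Om A C m).
set M := (A ^+ m)^T.
have kerK : forall y : 'rV[R]_n, (y <= K)%MS -> y *m Bk A C m.+1 = 0 -> y = 0.
  move=> y hy h0; apply: (obs0 A C hobs) => j hj.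
  case: (leqP j m) => hjm; first by apply: (proj1 (kerO A C m y) hy).
  by have -> : j = m.+1 by nlia.
have BkS : Bk A C m.+1 = M *m Bk A C 1.
  by have := BkD A C 1 m; rewrite add1n.
have key0 : forall y : 'rV[R]_n, (y <= K)%MS -> y *m M = 0 -> y = 0.
  by move=> y hy h0; apply: kerK => //; rewrite BkS mulmxA h0 mul0mx.
have cap0 : forall p (L : 'M[R]_(p, n)), (forall y : 'rV[R]_n, (y <= K)%MS -> (y <= L)%MS -> y = 0) ->
    \rank (K :&: L)%MS = 0%N.
  move=> p L h; apply/eqP; rewrite mxrank_eq0 -submx0; apply/row_subP => r.
  have := row_sub r (K :&: L)%MS; rewrite sub_capmx => /andP [h1 h2].
  by rewrite (h _ h1 h2) sub0mx.
have rKM : \rank (K *m M) = \rank K.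
  have := mxrank_mul_ker K M; rewrite cap0 ?addn0 //.
  by move=> y h1 /sub_kermxP h2; apply: key0.
have rK : \rank K = 1%N.
  have c1 := mxrank_sum_cap K (kermx (Bk A C m.+1)).
  rewrite cap0 in c1; last by move=> y h1 /sub_kermxP h2; apply: kerK.
  have r1 := rank_leq_col (K + kermx (Bk A C m.+1))%MS.
  have r2 := rank_leq_col (Bk A C m.+1).
  have r3 := rank_leq_col (Om A C m).
  move: c1 r1; rewrite /K !mxrank_ker => c1 r1.
  nlia.
have dm : d m = 1%N by rewrite rdX // (eqmx_rank cl) rKM rK.
split => //.
move=> j Lpre.
set x := col j (X m).
have hx : (x^T <= K *m M)%MS.
  by rewrite tr_col; apply: (submx_trans (row_sub _ _)); case/andP: cl.
case/subMP: hx => y [hy exT].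
have rfX : row_free (X m)^T by rewrite /row_free -rdX.
have xn0 : x != 0.
  apply/eqP => hx0.
  have : row j (X m)^T == 0 by rewrite -tr_col -/x hx0 trmx0.
  rewrite rowE mulmx_free_eq0 // => /eqP /matrixP /(_ 0 j).
  by rewrite !mxE !eqxx /= => /eqP; rewrite oner_eq0.
have yn0 : y != 0.
  apply/eqP => hy0; move/eqP: xn0; apply.
  by rewrite -(trmxK x) exT hy0 mul0mx trmx0.
set z := y^T.
have hxw : x = A ^+ m *m z by rewrite -(trmxK x) exT trmx_mul trmxK.
have hL : Lpre = A ^+ m.+1 *m z.
  by rewrite /Lpre !colE -mulmxA -colE -/x hxw mulmxA mulmxE -exprS.
have hCw : forall k, C *m (A ^+ k *m z) = (y *m Bk A C k)^T.
  by move=> k; rewrite /Bk !trmx_mul !trmxK !mulmxA.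
have hg : (C *m Lpre) 0 0 = (y *m Bk A C m.+1) 0 0 by rewrite hL hCw mxE.
have g0 : (C *m Lpre) 0 0 != 0.
  rewrite hg; apply/eqP => h; move/eqP: yn0; apply.
  by apply: kerK => //; apply/scal0.
split.
  by apply/eqP => h; move: g0; rewrite h mulmx0 mxE eqxx.
split => //.
set g := (C *m Lpre) 0 0.
rewrite /mx_nilpotent; exists n.
set F := (A - _)%R.
have hCz : forall k, (k <= m)%N -> C *m (A ^+ k *m z) = 0.
  by move=> k hk; rewrite hCw (proj1 (kerO A C m y) hy k hk) trmx0.
have hAw : forall k, A *m (A ^+ k *m z) = A ^+ k.+1 *m z.
  by move=> k; rewrite mulmxA mulmxE -exprS.
have Fw : forall k, (k <= m)%N -> F *m (A ^+ k *m z) = A ^+ k.+1 *m z.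
  by move=> k hk; rewrite /F mulmxBl -mulmxA hCz // mulmx0 subr0 hAw.
have Flast : F *m Lpre = 0.
  rewrite /F mulmxBl -mulmxA [C *m Lpre]mx11_scalar -/g mul_mx_scalar scalerA mulfV //.
  by rewrite scale1r subrr.
have iter : forall t k, (k + t <= m.+1)%N -> F ^+ t *m (A ^+ k *m z) = A ^+ (k + t) *m z.
  elim => [|t IH] k hk; first by rewrite expr0 addn0 mul1mx.
  rewrite exprSr -mulmxE -mulmxA Fw; last by nlia.
  by rewrite IH ?addSnnS //; nlia.
have Fn0 : forall k, (k <= m.+1)%N -> F ^+ n *m (A ^+ k *m z) = 0.
  move=> k hk.
  have eF : F ^+ n = F ^+ k.+1 * F ^+ (m.+1 - k) by rewrite -exprD; congr (F ^+ _); nlia.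
  rewrite eF -mulmxE -mulmxA iter; last by nlia.
  have -> : (k + (m.+1 - k))%N = m.+1 by nlia.
  by rewrite -hL exprSr -mulmxE -mulmxA Flast mulmx0.
set W := \matrix_(a < n, b < n) ((A ^+ b *m z) a 0) : 'M[R]_n.
have FW : F ^+ n *m W = 0.
  apply/matrixP => a b; rewrite [RHS]mxE.
  transitivity ((F ^+ n *m (A ^+ b *m z)) a 0).
    by rewrite !mxE; apply: eq_bigr => l _; rewrite mxE.
  by rewrite Fn0 ?mxE //; have := ltn_ord b => hb; nlia.
have hu : forall u : 'rV[R]_n, u *m W^T = 0 -> u = 0.
  move=> u hu0.
  have hWu : W *m u^T = 0 by rewrite -(trmxK W) -trmx_mul hu0 trmx0.
  pose h := fun t => (C *m (A ^+ t *m z)) 0 0.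
  have hh0 : forall t, (t <= m)%N -> h t = 0 by move=> t ht; rewrite /h hCz // mxE.
  have hhm : h m.+1 = g by rewrite /h -hL.
  have sumz : forall s, \sum_(k < n) h (s + k)%N * u 0 k = 0.
    move=> s; have hz : (C *m A ^+ s *m (W *m u^T)) 0 0 = 0 by rewrite hWu mulmx0 mxE.
    rewrite -[RHS]hz.
    rewrite mulmxA mxE; apply: eq_bigr => k _; rewrite [u^T _ _]mxE; congr (_ * _).
    transitivity ((C *m A ^+ s *m (A ^+ k *m z)) 0 0).
      by rewrite /h exprD -mulmxE !mulmxA.
    by rewrite !mxE; apply: eq_bigr => l _; rewrite /W mxE.
  have Q : forall t, (t <= n)%N -> forall k : 'I_n, (n - t <= k)%N -> u 0 k = 0.
    elim => [|t IH] ht k hk.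
      by move: hk; rewrite subn0 leqNgt ltn_ord.
    have hk0 : (n - t.+1 < n)%N.
      by apply/ssrnat.ltP; nlia.
    pose k0 := Ordinal hk0.
    have e0 : u 0 k0 = 0.
      have := sumz t; rewrite (bigD1 k0) //= big1 ?addr0.
        have -> : (t + (n - t.+1))%N = m.+1 by nlia.
        by rewrite hhm => /eqP; rewrite mulf_eq0 (negbTE g0) /= => /eqP.
      move=> i hi; case: (ltnP i k0) => hik.
        by rewrite hh0 ?mul0r //; move: hik => /= hik; nlia.
      rewrite IH ?mulr0 //; first by nlia.
      by move: hi hik; rewrite -val_eqE /= => hi hik; nlia.
    case: (eqVneq k k0) => [->|hne] //.
    apply: IH; first by nlia.
    by move: hne hk; rewrite -val_eqE /= => hne hk; nlia.
  apply/matrixP => a b; rewrite ord1 mxE.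
  by apply: (Q n (leqnn n)); rewrite subnn.
have Wu : W \in unitmx.
  rewrite -unitmx_tr -row_free_unit -kermx_eq0 -submx0; apply/row_subP => r.
  have /sub_kermxP h := row_sub r (kermx W^T).
  by rewrite (hu _ h) sub0mx.
by rewrite -(mulmxK Wu (F ^+ n)) FW mul0mx.
Qed.
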